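(* Let $0<q<1$ and $p\ge1$. On the spin chain with sites $-p+\tfrac12,\dots,p-\tfrac12$, consider the probability measure on $p$-element sets of down-spin positions $y_1>y_2>\dots>y_p$ given by $$\mathbb P(y_1,\dots,y_p)=\frac{q^{2\sum_{i=1}^p y_i}}{\sum_{y'_1>\dots>y'_p}q^{2\sum_i y'_i}}$$ (the squared amplitudes of the normalized ground state $\sum q^{\sum_i y_i}\Omega(y_1,\dots,y_p)$ of the half-filled sector). For $1\le l\le p$ and $0\le\delta\le p$ let $P(l,\delta)$ be the probability that $y_l=\delta-l+\tfrac12$. Then $$P(l,\delta)=q^{2l\delta}\,\frac{\begin{bmatrix}p+\delta-l\\ \delta\end{bmatrix}_{q^2}\begin{bmatrix}p-\delta+l-1\\ l-1\end{bmatrix}_{q^2}}{\begin{bmatrix}2p\\ p\end{bmatrix}_{q^2}},$$ and, for fixed $l\ge1,\delta\ge0$, as $p\to\infty$, $$P(l,\delta)\to q^{2l\delta}\frac{(q^2;q^2)_\infty}{(q^2;q^2)_{l-1}(q^2;q^2)_\delta}.$$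
   Context: $\begin{bmatrix}n\\k\end{bmatrix}_{q^2}$ denotes the Gaussian binomial coefficient in base $q^2$ (zero if $k<0$ or $k>n$), and $(a;q^2)_k=\prod_{j=0}^{k-1}(1-aq^{2j})$, $(a;q^2)_\infty=\prod_{j\ge0}(1-aq^{2j})$. *)

(* Defs.v *)
From HB Require Import structures.
From mathcomp Require Import all_boot all_order all_algebra.
From mathcomp Require Import all_classical all_reals all_analysis.
Set Implicit Arguments. Unset Strict Implicit. Unset Printing Implicit Defensive.
Import Order.TTheory GRing.Theory Num.Theory numFieldNormedType.Exports.
Local Open Scope ring_scope.

Definition qpoch {R : comNzRingType} (a x : R) (k : nat) : R :=
  \prod_(j < k) (1 - a * x ^+ j).

Definition qpoch_inf {R : realType} (a x : R) : R :=
  limn (fun k : nat => (qpoch a x k : R^o)).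

Definition qbinom {R : fieldType} (x : R) (n k : nat) : R :=
  if (k <= n)%N then qpoch x x n / (qpoch x x k * qpoch x x (n - k))
  else 0.

(* Sites of the chain of length 2p: site i : 'I_(2p) sits at position
   i - p + 1/2, so positions run over -p+1/2, ..., p-1/2. *)
Definition site_pos {R : fieldType} (p i : nat) : R := i%:R - p%:R + 2^-1.

(* 2 * (sum of positions of the down spins in A), an integer. *)
Definition twice_pos_sum (p : nat) (A : {set 'I_(2 * p)}) : int :=
  \sum_(i in A) ((2 * i)%:Z - (2 * p)%:Z + 1).

Definition weight {R : fieldType} (q : R) (p : nat) (A : {set 'I_(2 * p)}) : R :=
  q ^ twice_pos_sum A.

Definition sorted_sites (p : nat) (A : {set 'I_(2 * p)}) : seq nat :=
  sort (fun a b => b <= a)%N [seq val i | i <- enum A].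

Definition y_pos {R : fieldType} (p : nat) (A : {set 'I_(2 * p)}) (l : nat) : R :=
  site_pos p (nth 0%N (sorted_sites A) l.-1).

Definition Pld {R : realType} (q : R) (p l delta : nat) : R :=
  (\sum_(A : {set 'I_(2 * p)} | (#|A| == p) && (y_pos (R:=R) A l == delta%:R - l%:R + 2^-1))
      weight q A)
  / (\sum_(A : {set 'I_(2 * p)} | #|A| == p) weight q A).

(* Main.v *)
Require Import Defs.
From HB Require Import structures.
From mathcomp Require Import all_boot all_order all_algebra.
From mathcomp Require Import ring lra zify.
Import Order.TTheory GRing.Theory Num.Theory.
Local Open Scope ring_scope.

Section QAlg.
Variable R : realFieldType.
Variable x : R.
Hypothesis x0 : 0 < x.
Hypothesis x1 : x < 1.

Lemma qpochS (a : R) n : qpoch a x n.+1 = qpoch a x n * (1 - a * x ^+ n).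
Proof. by rewrite /qpoch big_ord_recr. Qed.

Lemma qpoch0 (a : R) : qpoch a x 0 = 1.
Proof. by rewrite /qpoch big_ord0. Qed.

Lemma fac_gt0 n : 0 < 1 - x * x ^+ n.
Proof.
rewrite subr_gt0 -exprS exprn_ilt1 //; exact: ltW.
Qed.

Lemma qpoch_gt0 n : 0 < qpoch x x n.
Proof.
elim: n => [|n IH]; first by rewrite qpoch0.
by rewrite qpochS mulr_gt0 // fac_gt0.
Qed.

Lemma qpoch_neq0 n : qpoch x x n != 0.
Proof. by rewrite gt_eqF // qpoch_gt0. Qed.

Lemma qbinom0n k : qbinom x 0 k = (k == 0)%:R.
Proof. by case: k => [|k]; rewrite /qbinom //= !qpoch0 mulr1 divr1. Qed.

Lemma qbinomE n k : (k <= n)%N ->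
  qbinom x n k = qpoch x x n / (qpoch x x k * qpoch x x (n - k)).
Proof. by rewrite /qbinom => ->. Qed.

Lemma qbinom_pascal n k :
  qbinom x n.+1 k.+1 = qbinom x n k.+1 + x ^+ (n - k) * qbinom x n k.
Proof.
have [kn|nk] := ltnP k n.
  rewrite (qbinomE (n.+1) (k.+1) (ltnW kn)) (qbinomE n (k.+1) kn) (qbinomE n k (ltnW kn)).
  have -> : (n.+1 - k.+1 = (n - k.+1).+1)%N by lia.
  have -> : (n - k = (n - k.+1).+1)%N by lia.
  rewrite !qpochS.
  have -> : (n - k.+1).+1 = (n - k)%N by lia.
  have h1 := qpoch_neq0 n; have h2 := qpoch_neq0 k; have h3 := qpoch_neq0 (n - k.+1).
  have h4 := fac_gt0 k; have h5 := fac_gt0 (n - k.+1).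
  have h4' : 1 - x * x ^+ k != 0 by rewrite gt_eqF.
  have h5' : 1 - x * x ^+ (n - k.+1) != 0 by rewrite gt_eqF.
  have e : x ^+ n = x ^+ (n - k) * x ^+ k by rewrite -exprD; congr (_ ^+ _); lia.
  have e2 : x ^+ (n - k) = x * x ^+ (n - k.+1) by rewrite -exprS; congr (_ ^+ _); lia.
  rewrite e e2.
  move: h1 h2 h3 h4' h5'; set P := qpoch x x n; set Q := qpoch x x k; set S := qpoch x x _.
  set y := x ^+ k; set z := x ^+ _ => h1 h2 h3 h4' h5'.
  field. by rewrite h2 h3 h4' h5'.
 
case: (ltnP n k) => nk2.
  have f1 : (k.+1 <= n.+1)%N = false by apply/negbTE; rewrite -ltnNge.
  have f2 : (k.+1 <= n)%N = false by apply/negbTE; rewrite -ltnNge; exact: ltnW.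
  have f3 : (k <= n)%N = false by apply/negbTE; rewrite -ltnNge.
  by rewrite /qbinom f1 f2 f3 mulr0 addr0.
have -> : k = n by apply/eqP; rewrite eqn_leq nk nk2.
rewrite /qbinom ltnn leqnn subnn subnn !qpoch0 /= expr0 mul1r.
by rewrite leqnn !mulr1 add0r !divff // qpoch_neq0.
Qed.

End QAlg.


Section Sets.
Variable R : realFieldType.
Variable x : R.
Variable N : nat.

Definition sw (A : {set 'I_N}) : R := x ^+ (\sum_(i in A) (val i)).
Definition rng a b : {set 'I_N} := [set i : 'I_N | (a <= i < b)%N].
Definition H a b k := \sum_(A : {set 'I_N} | (A \subset rng a b) && (#|A| == k)) sw A.

Lemma sw0 : sw finset.set0 = 1.
Proof. by rewrite /sw big_set0. Qed.

Lemma H_k0 a b : H a b 0 = 1.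
Proof.
rewrite /H (eq_bigl (pred1 finset.set0)) ?big_pred1_eq ?sw0 // => A /=.
rewrite cards_eq0; case: eqP => [->|]; last by rewrite andbF.
by rewrite andbT; apply/subsetP => i; rewrite in_set0.
Qed.

Lemma H_base a k : H a a k = (k == 0)%:R.
Proof.
case: k => [|k]; first by rewrite H_k0.
rewrite /H big_pred0 // => A.
apply/negbTE/negP => /andP [sA /eqP cA].
have : A = finset.set0.
  apply/setP => i; rewrite in_set0; apply/negbTE/negP => iA.
  by move/subsetP: sA => /(_ i iA); rewrite inE; lia.
by move=> A0; rewrite A0 cards0 in cA.
Qed.

Lemma H_step a b k (hab : (a <= b)%N) (hb : (b < N)%N) : H a b.+1 k.+1 = H a b k.+1 + x ^+ b * H a b k.
Proof.
set bo := Ordinal hb.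
have rngS : rng a b.+1 = bo |: rng a b.
  apply/setP => i; rewrite !inE -val_eqE /=; lia.
have bnot : bo \notin rng a b by rewrite inE /=; lia.
rewrite /H [LHS](bigID (fun A : {set 'I_N} => bo \in A)) /= addrC; congr (_ + _).
  apply: eq_bigl => A /=; case bA: (bo \in A) => /=.
    rewrite andbF; symmetry; apply/negbTE/negP => /andP [sA _].
    by move/subsetP: sA => /(_ _ bA); rewrite (negbTE bnot).
  rewrite andbT rngS.
  case: (#|A| == k.+1); rewrite ?andbT ?andbF //.
  have [sA|sA] := boolP (A \subset rng a b).
    by rewrite (subset_trans sA) //; apply/subsetP => i iR; rewrite in_setU1 iR orbT.
  apply/negbTE/negP => sA'; apply: (negP sA).
  apply/subsetP => i iA; move/subsetP: sA' => /(_ i iA); rewrite !inE.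
  by case/orP => [/eqP ib|//]; move: bA; rewrite -ib iA; discriminate.
rewrite mulr_sumr.
rewrite (reindex_onto (fun A' => bo |: A') (fun A => A :\ bo)) /=; last first.
  by move=> A /andP [_ bA]; rewrite setD1K.
rewrite [RHS](big_mkcond) [LHS](big_mkcond); apply: eq_bigr => A _.
case sA: (A \subset rng a b).
  have bA : bo \notin A by apply/negP => /(subsetP sA); rewrite (negbTE bnot).
  rewrite setU11 andbT setU1K // eqxx andbT cardsU1 bA add1n eqSS.
  have -> : (bo |: A \subset rng a b.+1).
    by rewrite rngS setUS.
  case: (#|A| == k) => //=.
  by rewrite /sw big_setU1 //= exprD.
case: ifP => // /andP[/andP[/andP[s1 _] _] /eqP e].
move/negbT/negP: sA; case; apply/subsetP => i iA.
have : i \in (bo |: A) :\ bo by rewrite e.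
rewrite in_setD1 => /andP[ib iA2].
move/subsetP: s1 => /(_ i iA2); rewrite rngS in_setU1 (negbTE ib) //.
Qed.


Hypothesis x0 : 0 < x.
Hypothesis x1 : x < 1.

Lemma H_closed a d k : (a + d <= N)%N ->
  H a (a + d) k = x ^+ (k * a + 'C(k, 2)) * qbinom x d k.
Proof.
elim: d k => [|d IH] k hN.
  rewrite addn0 H_base qbinom0n; case: k => [|k] //=; last by rewrite mulr0.
  by rewrite mulr1 [X in x ^+ X](_ : _ = 0%N) // expr0.
case: k => [|k].
  rewrite H_k0 mul0n add0n bin0n expr0 mul1r /qbinom leq0n subn0 qpoch0 mul1r divff //.
  exact: qpoch_neq0.
rewrite addnS H_step ?leq_addr //; last by rewrite -addnS.
rewrite !IH; try by apply: leq_trans hN; rewrite addnS.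
rewrite qbinom_pascal // mulrDr; congr (_ + _).
have [kd|dk] := leqP k d; last first.
  by rewrite /qbinom leqNgt dk /= !mulr0.
rewrite !mulrA -!exprD; congr (_ ^+ _ * _).
rewrite binS bin1; lia.
Qed.

Lemma swU (B C : {set 'I_N}) : [disjoint B & C] -> sw (B :|: C) = sw B * sw C.
Proof.
move=> dBC; rewrite /sw -exprD; congr (_ ^+ _).
rewrite (eq_bigl [predU B & C]) ?bigU // => i; by rewrite !inE.
Qed.

Lemma split_sum (L U : {set 'I_N}) (P Q : pred {set 'I_N}) :
  [disjoint L & U] ->
  \sum_(A : {set 'I_N} | (A \subset L :|: U) && P (A :&: L) && Q (A :&: U)) sw A =
  (\sum_(B : {set 'I_N} | (B \subset L) && P B) sw B) *
  (\sum_(C : {set 'I_N} | (C \subset U) && Q C) sw C).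
Proof.
move=> dLU.
symmetry; rewrite big_distrl /=.
rewrite (eq_bigr (fun B => \sum_(C : {set 'I_N} | (C \subset U) && Q C) sw B * sw C)); last first.
  by move=> B _; rewrite mulr_sumr.
rewrite pair_big /=.
rewrite [RHS](reindex_onto (fun p : {set 'I_N} * {set 'I_N} => p.1 :|: p.2)
   (fun A : {set 'I_N} => (A :&: L, A :&: U))) /=; last first.
  by move=> A /andP [/andP [sA _] _]; rewrite -setIUr; apply/setIidPl.
apply: eq_big => [[B C]|[B C]] /=; last first.
  move=> /andP [/andP [bL _] /andP [cU _]]; symmetry; apply: swU.
  rewrite -setI_eq0; apply/eqP/setP => i; rewrite !inE.
  apply/negbTE/negP => /andP [iB iC].
  move/disjoint_setI0/setP: dLU => /(_ i); rewrite !inE.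
  by rewrite (subsetP bL _ iB) (subsetP cU _ iC).
symmetry.
have [bL|bL] := boolP (B \subset L); last first.
  rewrite /= xpair_eqE; apply/negbTE/negP => /andP [_ /andP [/eqP e _]].
  by move/negP: bL; apply; rewrite -e subsetIr.
have [cU|cU] := boolP (C \subset U); last first.
  rewrite /= andbF xpair_eqE; apply/negbTE/negP => /andP [_ /andP [_ /eqP e]].
  by move/negP: cU; apply; rewrite -e subsetIr.
have e1 : (B :|: C) :&: L = B.
  apply/setP => i; rewrite !inE; case iB: (i \in B) => /=; first by rewrite (subsetP bL).
  apply/negbTE/negP => /andP [iC iL]; move/disjoint_setI0/setP: dLU => /(_ i).
  by rewrite !inE iL (subsetP cU _ iC).
have e2 : (B :|: C) :&: U = C.
  apply/setP => i; rewrite !inE; case iC: (i \in C) => /=; first by rewrite orbT (subsetP cU).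
  rewrite orbF; apply/negbTE/negP => /andP [iB iU]; move/disjoint_setI0/setP: dLU => /(_ i).
  by rewrite !inE iU (subsetP bL _ iB).
rewrite e1 e2 !eqxx !andbT /=.
have -> : B :|: C \subset L :|: U by apply: setUSS.
by [].
Qed.

Lemma cond_sum (m : 'I_N) (j r : nat) :
  \sum_(A : {set 'I_N} | (#|A| == (j + r).+1) && (m \in A) &&
                         (#|[set i in A | (m < i)%N]| == r)) sw A
  = x ^+ m * H 0 m j * H m.+1 N r.
Proof.
rewrite (reindex_onto (fun A' => m |: A') (fun A : {set 'I_N} => A :\ m)) /=; last first.
  by move=> A /andP [/andP [_ mA] _]; rewrite setD1K.
set L := rng 0 m; set U := rng m.+1 N.
have dLU : [disjoint L & U].
  rewrite -setI_eq0; apply/eqP/setP => i; rewrite !inE; lia.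
have LU : L :|: U = [set~ m].
  apply/setP => i; rewrite !inE -val_eqE /=; have := ltn_ord i; lia.
transitivity (x ^+ m * \sum_(A' : {set 'I_N} | (A' \subset L :|: U) && (#|A' :&: L| == j)
                  && (#|A' :&: U| == r)) sw A').
  rewrite mulr_sumr; apply: eq_big => A'; last first.
    move=> /andP [_ /eqP e]; have mA : m \notin A' by rewrite -e !inE eqxx.
    by rewrite /sw big_setU1 //= exprD.
  rewrite LU.
  case mA: (m \in A').
    have -> : ((m |: A') :\ m == A') = false.
      by apply/negbTE/negP => /eqP e; move: mA; rewrite -e !inE eqxx.
    rewrite andbF; symmetry; apply/negbTE/negP => /andP [/andP [s _] _].
    by move/subsetP: s => /(_ m mA); rewrite !inE eqxx.
  have mA' : m \notin A' by rewrite mA.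
  rewrite setU1K // eqxx andbT setU11 andbT cardsU1 mA' add1n eqSS.
  have -> : A' \subset [set~ m].
    by apply/subsetP => i iA; rewrite !inE; apply/negP => /eqP ei; rewrite -ei iA in mA.
  have eU : [set i in m |: A' | (m < i)%N] = A' :&: U.
    apply/setP => i; rewrite !inE -val_eqE /=; have := ltn_ord i.
    case: (i \in A'); rewrite /= ?andbT ?andbF ?orbT ?orbF; lia.
  have cLU : (#|A' :&: L| + #|A' :&: U| = #|A'|)%N.
    have e : A' :\: U = A' :&: L.
      apply/setP => i; rewrite !inE; have := ltn_ord i.
    case iA: (i \in A'); rewrite /= ?andbT ?andbF //.
    have : i != m by apply/negP => /eqP ei; move: mA; rewrite -ei iA.
    rewrite -val_eqE /=; lia.
    by rewrite -(cardsID U A') e addnC.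
  rewrite eU /=.
  rewrite -cLU; have [->|_] := eqVneq #|A' :&: U| r; rewrite ?andbT ?andbF //.
  by rewrite eqn_add2r.
have := split_sum L U (fun B => #|B| == j) (fun C => #|C| == r) dLU; rewrite /= => ->.
by rewrite /H mulrA.
Qed.

End Sets.

Lemma count_enum (T : finType) (A : {set T}) (P : pred T) :
  count P (enum A) = #|[set i in A | P i]|.
Proof.
rewrite -size_filter -(card_uniqP (filter_uniq _ (enum_uniq (mem A)))).
by apply: eq_card => i; rewrite mem_filter mem_enum !inE andbC.
Qed.

Lemma sorted_count (s : seq nat) i : uniq s -> sorted (fun a b => b <= a)%N s ->
  (i < size s)%N -> count (fun y => nth 0 s i < y)%N s = i.
Proof.
move=> us ss his.
have tr : transitive (fun a b : nat => b <= a)%N by move=> a b c h1 h2; apply: leq_trans h2 h1.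
move: us ss; rewrite -{1 2 4}(cat_take_drop i s) => us ss.
rewrite count_cat (drop_nth 0 his).
rewrite sorted_pairwise // pairwise_cat in ss.
case/and3P: ss => /allrelP ar _ pd.
move: us; rewrite cat_uniq => /and3P [_ nh _].
have -> : count (fun y => nth 0 s i < y)%N (take i s) = i.
  rewrite -[RHS](size_takel (ltnW his)); apply/eqP; rewrite -all_count; apply/allP => y yt.
  have hd : nth 0 s i \in drop i s by rewrite (drop_nth 0 his) mem_head.
  have le := ar y _ yt hd.
  rewrite ltn_neqAle le andbT; apply/negP => /eqP e.
  by move/hasPn: nh => /(_ _ hd); rewrite e yt.
rewrite (drop_nth 0 his) /= in pd; case/andP: pd => al _.
rewrite /= ltnn add0n (@eq_in_count _ _ pred0); first by rewrite count_pred0 addn0.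
by move=> y /(allP al) /=; rewrite leqNgt => /negbTE.
Qed.

Section Conf.
Variable p : nat.
Variable A : {set 'I_(2 * p)}.

Lemma ss_uniq : uniq (sorted_sites A).
Proof. by rewrite /sorted_sites sort_uniq (map_inj_uniq val_inj) enum_uniq. Qed.

Lemma ss_sorted : sorted (fun a b => b <= a)%N (sorted_sites A).
Proof. by apply: sort_sorted => a b; apply: leq_total. Qed.

Lemma ss_size : size (sorted_sites A) = #|A|.
Proof. by rewrite /sorted_sites size_sort size_map cardE. Qed.

Lemma ss_mem (m : 'I_(2 * p)) : ((m : nat) \in sorted_sites A) = (m \in A).
Proof. by rewrite /sorted_sites mem_sort (mem_map val_inj) mem_enum. Qed.

Lemma ss_count (m : nat) :
  count (fun y => m < y)%N (sorted_sites A) = #|[set i in A | (m < i)%N]|.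
Proof. by rewrite /sorted_sites count_sort count_map count_enum. Qed.

Lemma nth_cond (m : 'I_(2 * p)) k : (k < #|A|)%N ->
  (nth 0%N (sorted_sites A) k == m) = (m \in A) && (#|[set i in A | (m < i)%N]| == k).
Proof.
move=> hk; rewrite -ss_size in hk.
apply/eqP/andP => [e|[mA /eqP c]].
  split; first by rewrite -ss_mem -e mem_nth.
  by rewrite -ss_count -e sorted_count // ?ss_uniq ?ss_sorted.
rewrite -ss_mem in mA.
have hi : (index (m : nat) (sorted_sites A) < size (sorted_sites A))%N by rewrite index_mem.
have := @sorted_count _ _ ss_uniq ss_sorted hi; rewrite nth_index // ss_count c => ->.
by rewrite nth_index.
Qed.

End Conf.

Lemma ypos_cond (R : realFieldType) p l d (A : {set 'I_(2 * p)}) (m : 'I_(2 * p)) :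
  (1 <= l <= p)%N -> #|A| = p -> (m : nat) = (p + d - l)%N ->
  (y_pos (R:=R) A l == d%:R - l%:R + 2^-1) =
  (m \in A) && (#|[set i in A | (m < i)%N]| == l.-1).
Proof.
move=> /andP [l1 lp] cA hm.
rewrite /y_pos /site_pos -nth_cond; last by rewrite cA; lia.
set n := nth _ _ _.
have E : (n%:R - p%:R + 2^-1 == d%:R - l%:R + 2^-1 :> R) = (n + l == d + p)%N.
  apply/eqP/eqP => H.
    apply/eqP; rewrite -(eqr_nat R) !natrD; apply/eqP; lra.
  have H' : ((n + l)%:R = (d + p)%:R :> R) by rewrite H.
  rewrite !natrD in H'; lra.
rewrite E; apply/eqP/eqP => H; lia.
Qed.

Lemma weight_sw (R : realFieldType) (q : R) p (A : {set 'I_(2 * p)}) :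
  q != 0 -> (1 <= p)%N ->
  weight q A = @sw _ (q ^+ 2) _ A / q ^+ (#|A| * (2 * p - 1)).
Proof.
move=> q0 p1.
have e : twice_pos_sum A = (\sum_(i in A) (2 * i))%N%:Z - (#|A| * (2 * p - 1))%N%:Z.
  rewrite /twice_pos_sum (big_morph Posz PoszD (erefl _)).
  rewrite (eq_bigr (fun i : 'I_(2 * p) => (2 * i)%N%:Z - (2 * p - 1)%N%:Z)); last first.
    move=> i _; lia.
  rewrite sumrB sumr_const; congr (_ - _).
  elim: #|A| => [|k IH] //; rewrite mulrS IH mulSn PoszD.
  by [].
rewrite /weight e expfzDr // exprnP -exprnN /sw -exprM -big_distrr.
by [].
Qed.

Lemma bin2D a b : 'C(a + b, 2) = ('C(a, 2) + 'C(b, 2) + a * b)%N.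
Proof.
elim: b => [|b IH]; first by rewrite addn0 bin0n muln0 !addn0.
by rewrite addnS binS IH bin1 binS bin1; lia.
Qed.

Lemma qbinom_sym (R : fieldType) (x : R) n k : (k <= n)%N -> qbinom x n k = qbinom x n (n - k).
Proof.
move=> kn; rewrite /qbinom kn leq_subr subKn //.
by rewrite [qpoch x x k * _]mulrC.
Qed.

Lemma qbinom_gt0 (R : realFieldType) (x : R) n k : 0 < x -> x < 1 -> (k <= n)%N -> 0 < qbinom x n k.
Proof.
move=> x0 x1 kn; rewrite /qbinom kn divr_gt0 ?mulr_gt0 //; exact: qpoch_gt0.
Qed.

Lemma main_formula (R : realFieldType) (q : R) (hq0 : 0 < q) (hq1 : q < 1) p l d :
  (1 <= l <= p)%N -> (d <= p)%N ->
  (\sum_(A : {set 'I_(2 * p)} | (#|A| == p) && (y_pos (R:=R) A l == d%:R - l%:R + 2^-1))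
      weight q A)
  / (\sum_(A : {set 'I_(2 * p)} | #|A| == p) weight q A) =
  q ^+ (2 * l * d) *
       (qbinom (q ^+ 2) (p + d - l) d
        * qbinom (q ^+ 2) (p - d + l - 1) (l - 1))
       / qbinom (q ^+ 2) (2 * p) p.
Proof.
move=> /andP [l1 lp] dp.
have p1 : (1 <= p)%N by apply: leq_trans lp.
set x := q ^+ 2.
have x0 : 0 < x by rewrite exprn_gt0.
have x1 : x < 1 by rewrite /x exprn_ilt1 // ltW.
have q0 : q != 0 by rewrite gt_eqF.
set c := q ^+ (p * (2 * p - 1)).
have c0 : c != 0 by rewrite expf_neq0.
have hm : (p + d - l < 2 * p)%N by lia.
set m := Ordinal hm.
set j := (p - l)%N; set r := (l - 1)%N.
have num : \sum_(A : {set 'I_(2 * p)} | (#|A| == p) && (y_pos (R:=R) A l == d%:R - l%:R + 2^-1))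
      weight q A = x ^+ m * @H R x (2 * p) 0 m j * @H R x (2 * p) m.+1 (2 * p) r / c.
  rewrite -(@cond_sum R x (2 * p) x0 x1 m j r) mulr_suml.
  apply: eq_big => A.
    case cA: (#|A| == p); last first.
      rewrite /=; symmetry; apply/negbTE/negP => /andP [/andP [/eqP h _] _].
      by move/negbT/eqP: cA; apply; rewrite h /j /r; lia.
    rewrite /= (@ypos_cond R p l d A m) ?l1 ?lp //; last by apply/eqP.
    have -> : (#|A| == (j + r).+1) = true by rewrite (eqP cA) /j /r; apply/eqP; lia.
    by rewrite /r subn1.
  move=> /andP [/eqP cA _]; rewrite weight_sw // cA.
  by [].
have den : \sum_(A : {set 'I_(2 * p)} | #|A| == p) weight q A = @H R x (2 * p) 0 (2 * p) p / c.
  rewrite /H mulr_suml; apply: eq_big => A.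
    have -> : A \subset rng (2 * p) 0 (2 * p) by apply/subsetP => i _; rewrite inE /=.
    by [].
  by move=> /eqP cA; rewrite weight_sw // cA.
rewrite num den.
have e1 := @H_closed R x (2 * p) x0 x1 0 m j; rewrite add0n in e1; rewrite e1 //; last exact: ltnW.
have e2 := @H_closed R x (2 * p) x0 x1 m.+1 (2 * p - m.+1) r.
rewrite subnKC // in e2; rewrite e2 //.
have e3 := @H_closed R x (2 * p) x0 x1 0 (2 * p) p; rewrite add0n in e3; rewrite e3 //.
rewrite (@qbinom_sym R x m j) /=; last by rewrite /j; lia.
have -> : (p + d - l - j = d)%N by rewrite /j; lia.
have -> : (2 * p - (p + d - l).+1 = p - d + l - 1)%N by lia.
have -> : q ^+ (2 * l * d) = x ^+ (l * d) by rewrite /x -exprM mulnA.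
have Qp := @qbinom_gt0 R x (2 * p) p x0 x1 (leq_pmull p (isT : (0 < 2)%N)).
have g0 : x ^+ (p * 0 + 'C(p, 2)) != 0 by rewrite expf_neq0 // gt_eqF.
have Q0 : qbinom x (2 * p) p != 0 by rewrite gt_eqF.
have E : x ^+ (p + d - l) * x ^+ (j * 0 + 'C(j, 2)) * x ^+ (r * (p + d - l).+1 + 'C(r, 2))
   = x ^+ (l * d) * x ^+ (p * 0 + 'C(p, 2)).
  rewrite -!exprD; congr (_ ^+ _).
  have hp : p = (j + r.+1)%N by rewrite /j /r; lia.
  have hl : l = r.+1 by rewrite /r; lia.
  have -> : 'C(p, 2) = ('C(j, 2) + 'C(r.+1, 2) + j * r.+1)%N by rewrite -bin2D -hp.
  rewrite binS bin1.
  have hm' : (p + d - l = j + d)%N by rewrite /j; lia.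
  rewrite hm' hl.
  nia.
move: E g0 Q0; set a := x ^+ (p + d - l); set b := x ^+ (j * 0 + _); set e := x ^+ (r * _ + _).
set f := x ^+ (l * d); set g := x ^+ (p * 0 + _) => E g0 Q0.
have -> : a * (b * qbinom x (p + d - l) d) * (e * qbinom x (p - d + l - 1) r) =
   (a * b * e) * (qbinom x (p + d - l) d * qbinom x (p - d + l - 1) r) by ring.
rewrite E; field.
by rewrite g0 Q0 c0.
Qed.

From mathcomp Require Import all_classical all_reals all_analysis.
From mathcomp Require Import ring lra zify.
Import Order.TTheory GRing.Theory Num.Theory numFieldNormedType.Exports.
Local Open Scope classical_set_scope.
Local Open Scope ring_scope.

Section Lim.
Variable R : realType.
Variable x : R.
Hypothesis x0 : 0 < x.
Hypothesis x1 : x < 1.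
Local Notation a := (qpoch x x).

Lemma a_gt0 n : 0 < a n.
Proof. exact: (@qpoch_gt0 R x x0 x1 n). Qed.

Lemma a_decr n t : a (n + t) <= a n.
Proof.
elim: t => [|t IH]; first by rewrite addn0.
rewrite addnS qpochS; apply: le_trans IH; rewrite ler_piMr ?(ltW (a_gt0 _)) //.
rewrite lerBlDr lerDl; apply: mulr_ge0; [exact: ltW | apply: exprn_ge0; exact: ltW].
Qed.

Lemma a_homo : {homo a : n m / (n <= m)%N >-> m <= n}.
Proof. by move=> n m nm; rewrite -(subnKC nm); apply: a_decr. Qed.

Lemma a_cvg : a @ \oo --> qpoch_inf x x.
Proof.
have lb : has_lbound (range a) by exists 0 => _ [n _ <-]; exact: ltW (a_gt0 n).
have hc := nonincreasing_is_cvgn a_homo lb.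
exact: hc.
Qed.

Lemma geo k t : (\sum_(i < t) x ^+ (k.+1 + i)) * (1 - x) = x ^+ k.+1 - x ^+ (k.+1 + t).
Proof.
elim: t => [|t IH]; first by rewrite big_ord0 mul0r addn0 subrr.
rewrite big_ord_recr /= mulrDl IH.
have -> : x ^+ (k.+1 + t.+1) = x ^+ (k.+1 + t) * x by rewrite addnS exprSr.
ring.
Qed.

Lemma a_lb k t : a k * (1 - \sum_(i < t) x ^+ (k.+1 + i)) <= a (k + t).
Proof.
elim: t => [|t IH]; first by rewrite big_ord0 subr0 mulr1 addn0.
rewrite big_ord_recr /= addnS qpochS.
set S := \sum_(i < t) _; set y := x ^+ (k.+1 + t).
have ey : x * x ^+ (k + t) = y by rewrite /y -exprS addSn.
rewrite ey.
have y0 : 0 <= y by apply: exprn_ge0; exact: ltW.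
have y1 : 0 < 1 - y by rewrite subr_gt0 /y exprn_ilt1 // ltW.
have S0 : 0 <= S by apply: sumr_ge0 => i _; apply: exprn_ge0; exact: ltW.
have ak := a_gt0 k.
have h1 : a k * (1 - S) * (1 - y) <= a (k + t) * (1 - y) by rewrite ler_pM2r.
have h2 : 0 <= a k * S * y by rewrite mulr_ge0 // mulr_ge0 // ltW.
nra.
Qed.

Lemma ratio_lb k n : (k <= n)%N -> 1 - x ^+ k / (1 - x) <= a n / a k.
Proof.
move=> kn; rewrite -(subnKC kn).
have ak := a_gt0 k.
rewrite ler_pdivlMr //.
apply: le_trans (a_lb k (n - k)).
set S := \sum_(i < _) _.
have hx : 0 < 1 - x by rewrite subr_gt0.
have hS : S <= x ^+ k / (1 - x).
  rewrite ler_pdivlMr // geo.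
  have h1 : x ^+ k.+1 <= x ^+ k by rewrite exprS ler_piMl // ?exprn_ge0 // ltW.
  have h2 : 0 <= x ^+ (k.+1 + (n - k)) by rewrite exprn_ge0 // ltW.
  lra.
rewrite mulrC ler_pM2l //; lra.
Qed.

Lemma ratio_ub k n : (k <= n)%N -> a n / a k <= 1.
Proof. by move=> kn; rewrite ler_pdivrMr ?a_gt0 // mul1r a_homo. Qed.

Lemma ratio_cvg (kf nf : nat -> nat) c :
  (forall p, kf p <= nf p)%N -> (forall p, p <= kf p + c)%N ->
  (fun p => a (nf p) / a (kf p)) @ \oo --> (1 : R).
Proof.
move=> hkn hc.
have hx : 0 < 1 - x by rewrite subr_gt0.
set K := ((1 - x) * x ^+ c)^-1.
have K0 : 0 < K by rewrite invr_gt0 mulr_gt0 // exprn_gt0.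
have lo : (fun p => 1 - x ^+ p * K) @ \oo --> (1 : R).
  have h1 : (fun p => x ^+ p * K) @ \oo --> 0 * K.
    apply: cvgM; last exact: cvg_cst.
    by apply: cvg_expr; rewrite ger0_norm // ltW.
  rewrite mul0r in h1.
  have h2 : (fun p => 1 - x ^+ p * K) @ \oo --> (1 - 0 : R) := cvgB (cvg_cst (1 : R)) h1.
  by move: h2; rewrite subr0; apply; typeclasses eauto.
apply: (squeeze_cvgr _ lo (cvg_cst (1 : R))).
apply: nearW => p /=; rewrite ratio_ub // andbT.
apply: le_trans (@ratio_lb (kf p) (nf p) (hkn p)).
rewrite lerD2l lerN2.
have xc : x ^+ c != 0 by rewrite gt_eqF // exprn_gt0.
have x1' : 1 - x != 0 by rewrite gt_eqF.
have -> : x ^+ p * K = (x ^+ p / x ^+ c) / (1 - x) by rewrite /K invfM [(1 - x)^-1 * _]mulrC mulrA.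
have x0w := ltW x0; have x1w := ltW x1.
rewrite ler_pM2r ?invr_gt0 // ler_pdivlMr ?exprn_gt0 // -exprD ler_wiXn2l ?hc //.
Qed.

End Lim.

Theorem mainTheorem2 (R : realType) (q : R) (hq0 : 0 < q) (hq1 : q < 1) :
  (forall p l delta : nat, (1 <= l <= p)%N -> (delta <= p)%N ->
     Pld q p l delta =
       q ^+ (2 * l * delta) *
       (qbinom (q ^+ 2) (p + delta - l) delta
        * qbinom (q ^+ 2) (p - delta + l - 1) (l - 1))
       / qbinom (q ^+ 2) (2 * p) p)
  /\
  (forall l delta : nat, (1 <= l)%N ->
     (fun p : nat => Pld q p l delta) @ \oo -->
       (q ^+ (2 * l * delta) * qpoch_inf (q ^+ 2) (q ^+ 2)
        / (qpoch (q ^+ 2) (q ^+ 2) (l - 1) * qpoch (q ^+ 2) (q ^+ 2) delta)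
        : R)).
Proof.
have part1 : forall p l delta : nat, (1 <= l <= p)%N -> (delta <= p)%N ->
     Pld q p l delta =
       q ^+ (2 * l * delta) *
       (qbinom (q ^+ 2) (p + delta - l) delta
        * qbinom (q ^+ 2) (p - delta + l - 1) (l - 1))
       / qbinom (q ^+ 2) (2 * p) p.
  by move=> p l d hl hd; rewrite /Pld; apply: main_formula.
split => // l d l1.
set x := q ^+ 2.
have x0 : 0 < x by rewrite exprn_gt0.
have x1 : x < 1 by rewrite /x exprn_ilt1 // ltW.
pose a := qpoch x x.
have ap n : a n != 0 by rewrite gt_eqF // (@a_gt0 R x x0 x1).
set C := q ^+ (2 * l * d) / (a (l - 1)%N * a d).
pose E p := C * ((a (p + d - l)%N / a (p - l)%N) * (a (p - d + l - 1)%N / a (p - d)%N) *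
                 (a p * (a (2 * p)%N / a p)^-1)).
have r1 : (fun p => a (p + d - l)%N / a (p - l)%N) @ \oo --> (1 : R).
  apply: (@ratio_cvg R x x0 x1 (fun p => p - l)%N (fun p => p + d - l)%N l) => p; lia.
have r2 : (fun p => a (p - d + l - 1)%N / a (p - d)%N) @ \oo --> (1 : R).
  apply: (@ratio_cvg R x x0 x1 (fun p => p - d)%N (fun p => p - d + l - 1)%N d) => p; lia.
have r3 : (fun p => a (2 * p)%N / a p) @ \oo --> (1 : R).
  apply: (@ratio_cvg R x x0 x1 (fun p => p)%N (fun p => 2 * p)%N 0) => p; lia.
have r3' : (fun p => (a (2 * p)%N / a p)^-1) @ \oo --> (1^-1 : R) := @cvgV _ _ _ eventually_filter _ _ (oner_neq0 R) r3.
have hL : a @ \oo --> qpoch_inf x x := @a_cvg R x x0 x1.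
have h12 : (fun p => (a (p + d - l)%N / a (p - l)%N) * (a (p - d + l - 1)%N / a (p - d)%N)) @ \oo
   --> (1 * 1 : R) := @cvgM _ _ _ eventually_filter _ _ _ _ r1 r2.
have h3 : (fun p => a p * (a (2 * p)%N / a p)^-1) @ \oo --> (qpoch_inf x x * 1^-1 : R)
   := @cvgM _ _ _ eventually_filter _ _ _ _ hL r3'.
have h123 : (fun p => (a (p + d - l)%N / a (p - l)%N) * (a (p - d + l - 1)%N / a (p - d)%N) *
                 (a p * (a (2 * p)%N / a p)^-1)) @ \oo --> (1 * 1 * (qpoch_inf x x * 1^-1) : R)
   := @cvgM _ _ _ eventually_filter _ _ _ _ h12 h3.
have hE : E @ \oo --> (C * (1 * 1 * (qpoch_inf x x * 1^-1)) : R) := @cvgM _ _ _ eventually_filter _ _ _ _ (cvg_cst C) h123.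
rewrite invr1 !mul1r mulr1 in hE.
have -> : q ^+ (2 * l * d) * qpoch_inf x x / (a (l - 1)%N * a d) = C * qpoch_inf x x.
  by rewrite /C mulrAC.
have HN : {near \oo, E =1 (fun p => Pld q p l d)}.
  exists (l + d)%N => // p /= hp.
  rewrite part1; last by lia.
    2: lia.
  rewrite -/x (@qbinomE _ x (p + d - l) d); last by lia.
  rewrite (@qbinomE _ x (p - d + l - 1) (l - 1)); last by lia.
  rewrite (@qbinomE _ x (2 * p) p); last by lia.
  have -> : (p + d - l - d = p - l)%N by lia.
  have -> : (p - d + l - 1 - (l - 1) = p - d)%N by lia.
  have -> : (2 * p - p = p)%N by lia.
  rewrite /E /C -/a.
  have := ap (p + d - l)%N; have := ap (p - l)%N; have := ap (p - d + l - 1)%N.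
  have := ap (p - d)%N; have := ap (l - 1)%N; have := ap d; have := ap p; have := ap (2 * p)%N.
  move=> z1 z2 z3 z4 z5 z6 z7 z8.
  field.
  by rewrite ?z1 ?z2 ?z3 ?z4 ?z5 ?z6 ?z7 ?z8.
exact: (cvg_trans (@near_eq_cvg _ _ _ eventually_filter _ _ HN) (hE eventually_filter)).
Qed.
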